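(* Let $<_{st}$ and $<_{wk}$ be two strict partial orders on the same set $D$ such that $<_{st}$ extends $<_{wk}$. Then the following two conditions are equivalent: $( * )$ for every $k$ there exists a $<_{st}$-chain with $k$ elements which is a $<_{wk}$-antichain; $(\dagger)$ for every $k$ there exists a finite $<_{st}$-chain $X$ which is not the union of $k$ $<_{wk}$-chains. *)

(* Defs.v *)
From Stdlib Require Import List Arith.
Import ListNotations.

Definition strict_po {D : Type} (R : D -> D -> Prop) : Prop :=
  (forall x, ~ R x x) /\ (forall x y z, R x y -> R y z -> R x z).

Definition extends {D : Type} (R' R : D -> D -> Prop) : Prop :=
  forall x y, R x y -> R' x y.

Definition is_chain {D : Type} (R : D -> D -> Prop) (X : D -> Prop) : Prop :=
  forall x y, X x -> X y -> x <> y -> R x y \/ R y x.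

Definition is_antichain {D : Type} (R : D -> D -> Prop) (X : D -> Prop) : Prop :=
  forall x y, X x -> X y -> x <> y -> ~ R x y /\ ~ R y x.

(* Finite sets are represented by duplicate-free lists; the finite set
   underlying l is (fun x => In x l). *)
Definition fset_of {D : Type} (l : list D) : D -> Prop := fun x => In x l.

Definition union_of_k_chains {D : Type} (R : D -> D -> Prop) (k : nat) (l : list D) : Prop :=
  exists C : nat -> D -> Prop,
    (forall i, i < k -> is_chain R (C i)) /\
    (forall x, In x l <-> exists i, i < k /\ C i x).

Definition cond_star {D : Type} (st wk : D -> D -> Prop) : Prop :=
  forall k : nat, exists l : list D,
    NoDup l /\ length l = k /\ is_chain st (fset_of l) /\ is_antichain wk (fset_of l).

Definition cond_dagger {D : Type} (st wk : D -> D -> Prop) : Prop :=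
  forall k : nat, exists l : list D,
    is_chain st (fset_of l) /\ ~ union_of_k_chains wk k l.

(* Main.v *)
Require Import Defs.
From Stdlib Require Import List Arith.
From Stdlib Require Import Lia Classical ClassicalEpsilon.
Import ListNotations.

Lemma rem_elt {D : Type} (x : D) (A : list D) : In x A ->
  exists A', (forall y, In y A' <-> In y A /\ y <> x) /\ length A' < length A /\
    (NoDup A -> NoDup A' /\ length A = S (length A')).
Proof.
induction A as [|h t IH]; simpl; intros Hin; [contradiction|].
destruct (classic (h = x)) as [Heq|Hne].
- subst h. destruct (classic (In x t)) as [Ht|Ht].
  + destruct (IH Ht) as [t' [H1 [H2 H3]]]. exists t'. split; [|split].
    * intro y. rewrite H1. split; [intros [? ?]; auto | intros [[?|?] ?]; [congruence|auto]].
    * lia.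
    * intro Hnd. inversion Hnd; contradiction.
  + exists t. split; [|split].
    * intro y. split; [intro Hy; split; [auto| intro; subst; contradiction] | intros [[?|?] ?]; [congruence|auto]].
    * lia.
    * intro Hnd. inversion Hnd; subst. split; auto.
- destruct Hin as [Hin|Hin]; [contradiction|].
  destruct (IH Hin) as [t' [H1 [H2 H3]]]. exists (h :: t'). split; [|split].
  * intro y. simpl. rewrite H1. split.
    -- intros [<-|[? ?]]; auto.
    -- intros [[<-|?] ?]; auto.
  * simpl; lia.
  * intro Hnd. inversion Hnd as [|? ? Hh Ht]; subst. destruct (H3 Ht) as [Hn' Hl]. split.
    -- constructor; auto. rewrite H1. intros [? ?]; auto.
    -- simpl; lia.
Qed.

Lemma count {D : Type} (C : nat -> D -> Prop) (idx : list nat) : forall A, NoDup A ->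
  (forall x, In x A -> exists i, In i idx /\ C i x) ->
  (forall i x y, In i idx -> C i x -> C i y -> In x A -> In y A -> x = y) ->
  length A <= length idx.
Proof.
induction idx as [|i t IH]; intros A Hnd Hcov Huniq.
- destruct A as [|x A']; simpl; auto. destruct (Hcov x (or_introl eq_refl)) as [i [[] _]].
- destruct (classic (exists x, In x A /\ C i x)) as [[x [HxA HCx]]|Hno].
  + destruct (rem_elt x A HxA) as [A' [H1 [H2 H3]]]. destruct (H3 Hnd) as [Hnd' Hl].
    assert (length A' <= length t).
    { apply IH; auto.
      - intros y Hy. apply H1 in Hy as [HyA Hyx]. destruct (Hcov y HyA) as [j [[Hji|Hj] HCj]].
        + subst j. exfalso. apply Hyx. exact (Huniq i y x (or_introl eq_refl) HCj HCx HyA HxA).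
        + eauto.
      - intros j y z Hj Hy Hz HyA HzA. apply H1 in HyA as [? _]. apply H1 in HzA as [? _].
        apply (Huniq j); auto. right; auto. }
    simpl; lia.
  + assert (length A <= length t).
    { apply IH; auto.
      - intros y Hy. destruct (Hcov y Hy) as [j [[Hji|Hj] HCj]].
        + subst j. exfalso. apply Hno. eauto.
        + eauto.
      - intros j y z Hj. apply Huniq. right; auto. }
    simpl; lia.
Qed.

Lemma exists_max {D : Type} (R : D -> D -> Prop) (HR : strict_po R) (l : list D) :
  forall S : D -> Prop, (forall x, S x -> In x l) -> (exists x, S x) ->
  exists m, S m /\ forall y, S y -> ~ R m y.
Proof.
destruct HR as [Hirr Htr].
induction l as [|h t IH]; intros S Hsub [x Hx].
- destruct (Hsub x Hx).
- destruct (classic (S h)) as [Hh|Hnh].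
  + destruct (classic (exists y, S y /\ y <> h)) as [Hne|Hemp].
    * destruct (IH (fun y => S y /\ y <> h)) as [m [[Hm Hmh] Hmax]].
      { intros y [Hy Hyh]. destruct (Hsub y Hy); [congruence|auto]. }
      { exact Hne. }
      destruct (classic (R m h)) as [Hrmh|Hrmh].
      -- exists h. split; auto. intros y Hy Hhy. destruct (classic (y = h)) as [->|Hyh];
           [exact (Hirr h Hhy)|]. exact (Hmax y (conj Hy Hyh) (Htr _ _ _ Hrmh Hhy)).
      -- exists m. split; auto. intros y Hy Hmy. destruct (classic (y = h)) as [->|Hyh];
           [contradiction|]. exact (Hmax y (conj Hy Hyh) Hmy).
    * exists h. split; auto. intros y Hy Hhy. destruct (classic (y = h)) as [->|Hyh];
        [exact (Hirr h Hhy)|]. apply Hemp; eauto.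
  + apply IH; [|eauto]. intros y Hy. destruct (Hsub y Hy); [congruence|auto].
Qed.

Lemma least (P : nat -> Prop) : forall n, P n -> exists i, P i /\ forall j, j < i -> ~ P j.
Proof.
intros n; induction n as [n IHn] using (well_founded_induction lt_wf). intro Pn.
destruct (classic (exists j, j < n /\ P j)) as [[j [Hj Pj]]|Hno];
  [exact (IHn j Hj Pj)|exists n; split; auto; intros j Hj Pj; apply Hno; eauto].
Qed.

Lemma dilworth {D : Type} (wk : D -> D -> Prop) (Hwk : strict_po wk) :
  forall n (l : list D), length l <= n -> forall Sp : D -> Prop, (forall x, Sp x -> In x l) ->
  forall k, (forall A, NoDup A -> (forall x, In x A -> Sp x) -> is_antichain wk (fset_of A) -> length A <= k) ->
  exists C : nat -> D -> Prop, (forall i, i < k -> is_chain wk (C i)) /\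
    (forall x, Sp x <-> exists i, i < k /\ C i x).
Proof.
pose proof Hwk as [Hirr Htr].
intros n; induction n as [|n IH]; intros l Hl Sp HS k Hk;
(destruct (classic (exists x, Sp x)) as [Hne|Hemp];
 [|exists (fun _ _ => False); split; [intros i _ x y []|];
   intro x; split; [intro Hx; exfalso; eauto| intros [? [? []]]]]).
{ destruct Hne as [x Hx]; apply HS in Hx; destruct l; [destruct Hx| simpl in Hl; lia]. }
destruct (exists_max wk Hwk l Sp HS Hne) as [a [Ha Hamax]].
destruct k as [|k'].
{ exfalso. assert (length [a] <= 0); [|simpl in *; lia].
  apply Hk. constructor; [intros []|constructor]. intros x [<-|[]]; auto.
  intros x y [<-|[]] [<-|[]] Hxy; congruence. }
set (k := S k').
destruct (rem_elt a l (HS a Ha)) as [l' [Hl'1 [Hl'2 _]]].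
set (S' := fun y => Sp y /\ y <> a).
assert (HS' : forall x, S' x -> In x l') by (intros x [Hx Hxa]; apply Hl'1; auto).
assert (Hln : length l' <= n) by lia.
assert (Hk' : forall A, NoDup A -> (forall x, In x A -> S' x) -> is_antichain wk (fset_of A) -> length A <= k).
{ intros A H1 H2 H3. apply Hk; auto. intros x Hx; apply H2; auto. }
destruct (classic (exists A, NoDup A /\ (forall x, In x A -> S' x) /\ is_antichain wk (fset_of A) /\ length A = k)) as [[A0 [HA1 [HA2 [HA3 HA4]]]]|HnoA].
2:{ destruct (IH l' Hln S' HS' k') as [C [HC Hcov]].
    { intros A H1 H2 H3. specialize (Hk' A H1 H2 H3).
      destruct (Nat.eq_dec (length A) k) as [He|He]; [exfalso; apply HnoA; eauto|]. unfold k in *; lia. }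
    exists (fun i y => (i < k' /\ C i y) \/ (i = k' /\ y = a)). split.
    - intros i Hi x y [[Hi1 Hx]|[Hi1 Hx]] [[Hi2 Hy]|[Hi2 Hy]] Hxy; try lia.
      + apply (HC i Hi1); auto.
      + subst; congruence.
    - intro x. split.
      + intro Hx. destruct (classic (x = a)) as [->|Hxa].
        * exists k'. split; [unfold k; lia|]. right; auto.
        * destruct (proj1 (Hcov x) (conj Hx Hxa)) as [i [Hi HCi]]. exists i. split; [unfold k; lia|]. left; auto.
      + intros [i [Hi [[Hi1 HC1]|[Hi1 ->]]]]; auto.
        apply (proj2 (Hcov x)). eauto. }
destruct (IH l' Hln S' HS' k Hk') as [C [HC Hcov]].
set (Cd := fun i y => C i y /\ forall j, j < i -> ~ C j y).
assert (HCd_S : forall i y, i < k -> Cd i y -> S' y).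
{ intros i y Hi [Hy _]. apply Hcov. eauto. }
assert (HCd_cov : forall y, S' y -> exists i, i < k /\ Cd i y).
{ intros y Hy. apply Hcov in Hy as [i [Hi HCi]].
  destruct (least (fun j => C j y) i HCi) as [j [Hj Hmin]].
  exists j. assert (j <= i). { destruct (Nat.le_gt_cases j i); auto. exfalso; exact (Hmin i H HCi). }
  split; [lia|]. split; auto. }
assert (Hdisj : forall i j y, Cd i y -> Cd j y -> i = j).
{ intros i j y [Hi Hmi] [Hj Hmj]. destruct (lt_eq_lt_dec i j) as [[H|H]|H]; auto.
  - exfalso; exact (Hmj i H Hi).
  - exfalso; exact (Hmi j H Hj). }
assert (Hmeet : forall B, NoDup B -> (forall x, In x B -> S' x) -> is_antichain wk (fset_of B) -> length B = k ->
   forall i, i < k -> exists y, In y B /\ Cd i y).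
{ intros B H1 H2 H3 H4 i Hi. apply NNPP; intro Hno.
  assert (length B <= length (remove Nat.eq_dec i (seq 0 k))).
  { apply (count Cd); auto.
    - intros x Hx. destruct (HCd_cov x (H2 x Hx)) as [j [Hj HCj]]. exists j. split; auto.
      apply in_in_remove; [intros ->; apply Hno; eauto|]. apply in_seq; lia.
    - intros j x y Hj Hx Hy HxB HyB. apply in_remove in Hj as [Hj _]. apply in_seq in Hj.
      destruct (classic (x = y)) as [|Hxy]; auto. exfalso.
      destruct (HC j ltac:(lia) x y (proj1 Hx) (proj1 Hy) Hxy) as [H|H];
        destruct (H3 x y HxB HyB Hxy); contradiction. }
  pose proof (remove_length_lt Nat.eq_dec (seq 0 k) i ltac:(apply in_seq; lia)).
  rewrite length_seq in H0. lia. }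
set (T := fun i y => Cd i y /\ exists B, NoDup B /\ (forall x, In x B -> S' x) /\
            is_antichain wk (fset_of B) /\ length B = k /\ In y B).
set (Pm := fun i m => T i m /\ forall y, T i y -> ~ wk m y).
assert (HPm : forall i, i < k -> exists m, Pm i m).
{ intros i Hi. apply (exists_max wk Hwk l').
  - intros y [Hy _]. apply HS'. eapply HCd_S; eauto.
  - destruct (Hmeet A0 HA1 HA2 HA3 HA4 i Hi) as [y [Hy HCy]]. exists y. split; auto.
    exists A0; split; [|split; [|split; [|split]]]; auto. }
set (xf := fun i => epsilon (inhabits a) (Pm i)).
assert (Hxf : forall i, i < k -> Pm i (xf i)).
{ intros i Hi. apply epsilon_spec. auto. }
assert (Hbelow : forall i y, i < k -> T i y -> y = xf i \/ wk y (xf i)).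
{ intros i y Hi HTy. destruct (classic (y = xf i)) as [|Hne']; auto. right.
  destruct (Hxf i Hi) as [[[HCx _] _] Hmax].
  destruct (HC i Hi y (xf i) (proj1 (proj1 HTy)) HCx Hne') as [H|H]; auto.
  exfalso; exact (Hmax y HTy H). }
assert (Hanti : forall i j, i < k -> j < k -> i <> j -> ~ wk (xf i) (xf j)).
{ intros i j Hi Hj Hij Hw.
  destruct (Hxf j Hj) as [[HCdj [B [HB1 [HB2 [HB3 [HB4 HB5]]]]]] _].
  destruct (Hmeet B HB1 HB2 HB3 HB4 i Hi) as [y [HyB HCdy]].
  assert (HTy : T i y) by (split; auto; exists B; split; [|split; [|split; [|split]]]; auto).
  assert (Hyx : wk y (xf j)).
  { destruct (Hbelow i y Hi HTy) as [->|H]; auto. eapply Htr; eauto. }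
  assert (Hne' : y <> xf j) by (intros ->; apply Hij; eapply Hdisj; eauto).
  destruct (HB3 y (xf j) HyB HB5 Hne'); contradiction. }
assert (HxS' : forall i, i < k -> S' (xf i)).
{ intros i Hi. destruct (Hxf i Hi) as [[H _] _]. eapply HCd_S; eauto. }
assert (Hi0 : exists i0, i0 < k /\ wk (xf i0) a).
{ apply NNPP; intro Hno.
  assert (length (a :: map xf (seq 0 k)) <= k); [|simpl in H; rewrite length_map, length_seq in H; lia].
  apply Hk.
  - constructor.
    + intro H. apply in_map_iff in H as [i [Hia Hi]]. apply in_seq in Hi.
      destruct (HxS' i ltac:(lia)) as [_ Hn]. auto.
    + apply NoDup_map_NoDup_ForallPairs; [|apply seq_NoDup].
      intros i j Hi Hj He. apply in_seq in Hi, Hj.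
      destruct (Hxf i ltac:(lia)) as [[H1 _] _]. destruct (Hxf j ltac:(lia)) as [[H2 _] _].
      rewrite He in H1. eapply Hdisj; eauto.
  - intros x [<-|Hx]; auto. apply in_map_iff in Hx as [i [<- Hi]]. apply in_seq in Hi.
    apply (HxS' i); lia.
  - intros x y Hx Hy Hxy. destruct Hx as [<-|Hx]; destruct Hy as [<-|Hy].
    + congruence.
    + apply in_map_iff in Hy as [j [<- Hj]]. apply in_seq in Hj. split.
      * apply Hamax. apply (HxS' j); lia.
      * intro H. apply Hno; exists j; split; auto; lia.
    + apply in_map_iff in Hx as [j [<- Hj]]. apply in_seq in Hj. split.
      * intro H. apply Hno; exists j; split; auto; lia.
      * apply Hamax. apply (HxS' j); lia.
    + apply in_map_iff in Hx as [i [<- Hi]]. apply in_map_iff in Hy as [j [<- Hj]].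
      apply in_seq in Hi, Hj.
      assert (i <> j) by (intros ->; congruence).
      split; apply Hanti; auto; lia. }
destruct Hi0 as [i0 [Hi0 Hwa]].
set (K := fun y => y = a \/ (Cd i0 y /\ (y = xf i0 \/ wk y (xf i0)))).
set (S'' := fun y => S' y /\ ~ K y).
destruct (IH l' Hln S'' (fun x Hx => HS' x (proj1 Hx)) k') as [C3 [HC3 Hcov3]].
{ intros B H1 H2 H3. assert (Hle : length B <= k) by (apply Hk'; auto; intros x Hx; apply H2; auto).
  destruct (Nat.eq_dec (length B) k) as [He|He]; [|unfold k in *; lia]. exfalso.
  destruct (Hmeet B H1 (fun x Hx => proj1 (H2 x Hx)) H3 He i0 Hi0) as [y [HyB HCdy]].
  assert (HTy : T i0 y) by (split; auto; exists B; split; [|split; [|split; [|split]]]; auto; intros x Hx; apply H2; auto).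
  apply (proj2 (H2 y HyB)). right. split; auto. }
exists (fun i y => (i < k' /\ C3 i y) \/ (i = k' /\ K y)). split.
- intros i Hi x y [[Hi1 Hx]|[Hi1 Hx]] [[Hi2 Hy]|[Hi2 Hy]] Hxy; try lia.
  + apply (HC3 i Hi1); auto.
  + destruct Hx as [->|[Hx1 Hx2]]; destruct Hy as [->|[Hy1 Hy2]].
    * congruence.
    * right. destruct Hy2 as [->|H]; auto. eapply Htr; eauto.
    * left. destruct Hx2 as [->|H]; auto. eapply Htr; eauto.
    * apply (HC i0 Hi0); auto. exact (proj1 Hx1). exact (proj1 Hy1).
- intro x. split.
  + intro Hx. destruct (classic (K x)) as [HK|HK].
    * exists k'. split; [unfold k; lia|]. right; auto.
    * assert (Hxa : x <> a) by (intros ->; apply HK; left; auto).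
      destruct (proj1 (Hcov3 x) (conj (conj Hx Hxa) HK)) as [i [Hi HCi]].
      exists i. split; [unfold k; lia|]. left; auto.
  + intros [i [Hi [[Hi1 HC1]|[Hi1 HK]]]].
    * exact (proj1 (proj1 (proj2 (Hcov3 x) (ex_intro _ i (conj Hi1 HC1))))).
    * destruct HK as [->|[HCd _]]; auto. exact (proj1 (HCd_S i0 x Hi0 HCd)).
Qed.

Theorem mainTheorem15 (D : Type) (st wk : D -> D -> Prop)
  (Hst : strict_po st) (Hwk : strict_po wk) (Hext : extends st wk) :
  cond_star st wk <-> cond_dagger st wk.
Proof.
split.
- intros Hs k. destruct (Hs (S k)) as [l [Hnd [Hlen [Hch Hanti]]]]. exists l. split; auto.
  intros [C [HC Hcov]].
  assert (length l <= length (seq 0 k)).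
  { apply (count C); auto.
    - intros x Hx. apply Hcov in Hx as [i [Hi HCi]]. exists i. split; auto. apply in_seq. lia.
    - intros i x y Hi Hx Hy HxA HyA. apply in_seq in Hi. destruct (classic (x = y)) as [|Hxy]; auto.
      exfalso. destruct (HC i ltac:(lia) x y Hx Hy Hxy) as [H|H];
        destruct (Hanti x y HxA HyA Hxy); contradiction. }
  rewrite length_seq in H. lia.
- intros Hd n. destruct (Hd n) as [l [Hch Hnot]].
  destruct (classic (exists A, NoDup A /\ (forall x, In x A -> In x l) /\ is_antichain wk (fset_of A) /\ n < length A)) as [[A [HA1 [HA2 [HA3 HA4]]]]|Hno].
  + assert (Hsplit := firstn_skipn n A).
    assert (Hin : forall x, In x (firstn n A) -> In x A).
    { intros x Hx. rewrite <- Hsplit. apply in_or_app; auto. }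
    exists (firstn n A). split; [|split; [|split]].
    * rewrite <- Hsplit in HA1. apply NoDup_app_remove_r in HA1. exact HA1.
    * rewrite length_firstn. lia.
    * intros x y Hx Hy Hxy. apply Hch; [apply HA2, Hin, Hx | apply HA2, Hin, Hy | exact Hxy].
    * intros x y Hx Hy Hxy. apply HA3; [apply Hin, Hx | apply Hin, Hy | exact Hxy].
  + exfalso. apply Hnot.
    destruct (dilworth wk Hwk (length l) l (le_n _) (fset_of l) (fun x H => H) n) as [C [HC Hcov]].
    * intros A H1 H2 H3. destruct (Nat.le_gt_cases (length A) n); auto. exfalso; apply Hno; eauto.
    * exists C. split; auto.
Qed.
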